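(* For every integer $k\geq 2$, the direct power $\mathbb{N}^k$ contains uncountably many pairwise non-isomorphic subdirect products.
   Context: $\mathbb{N}=\{1,2,3,\dots\}$ is the free monogenic semigroup (positive integers under addition), and $\mathbb{N}^k$ is its $k$-fold direct power with componentwise addition. A subdirect product of $\mathbb{N}^k$ is a subsemigroup $U\leq\mathbb{N}^k$ such that for each $i=1,\dots,k$ the projection of $U$ onto the $i$-th coordinate is all of $\mathbb{N}$. *)

(* Defs.v *)
From mathcomp Require Import all_boot.
Set Implicit Arguments. Unset Strict Implicit. Unset Printing Implicit Defensive.

(* Elements of the ambient carrier: k-tuples of naturals, as finite functions.
   An element of N^k (N = {1,2,3,...}) is such a tuple with all entries >= 1. *)
Definition vec (k : nat) := {ffun 'I_k -> nat}.

Definition inNk (k : nat) (x : vec k) : Prop := forall i : 'I_k, 0 < x i.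

Definition vadd (k : nat) (x y : vec k) : vec k := [ffun i => x i + y i].

Definition subsemigroup (k : nat) (U : vec k -> Prop) : Prop :=
  (forall x, U x -> inNk x) /\
  (forall x y, U x -> U y -> U (vadd x y)).

Definition subdirect (k : nat) (U : vec k -> Prop) : Prop :=
  subsemigroup U /\
  (forall (i : 'I_k) (n : nat), 0 < n -> exists x, U x /\ x i = n).

Definition semigroup_iso (k : nat) (U V : vec k -> Prop) : Prop :=
  exists (f g : vec k -> vec k),
    (forall x, U x -> V (f x)) /\
    (forall y, V y -> U (g y)) /\
    (forall x, U x -> g (f x) = x) /\
    (forall y, V y -> f (g y) = y) /\
    (forall x y, U x -> U y -> f (vadd x y) = vadd (f x) (f y)).

Definition same_set (k : nat) (U V : vec k -> Prop) : Prop :=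
  forall x, U x <-> V x.

Definition countable_family (k : nat) (S : (vec k -> Prop) -> Prop) : Prop :=
  exists e : nat -> (vec k -> Prop), forall U, S U -> exists n, same_set U (e n).

(* Main.v *)
Require Import Defs.
From mathcomp Require Import all_boot zify.
Definition W (A : nat -> Prop) (a b : nat) : Prop :=
  (2 <= a /\ 2 <= b) \/ (a = 1 /\ (b = 1 \/ (3 <= b /\ A (b-3)))).

Lemma W_pos A a b : W A a b -> 0 < a /\ 0 < b.
Proof. case=> [[]|[-> [->|[]]]]; lia. Qed.

Lemma lin_nat (A : nat -> Prop) (h : nat -> nat -> nat) :
  (forall a b c d, W A a b -> W A c d -> h (a+c) (b+d) = h a b + h c d) ->
  (forall a b, W A a b -> 0 < h a b) ->
  exists p q, forall a b, W A a b -> h a b = a * p + b * q.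
Proof.
move=> Hadd Hpos.
have WT : forall a b, 2 <= a -> 2 <= b -> W A a b by move=> a b ? ?; left.
have st1 : forall a b, 2 <= a -> 2 <= b -> h (a+1) b + h 2 2 = h a b + h 3 2.
  move=> a b ha hb.
  have e1 := Hadd (a+1) b 2 2 (WT _ _ (leq_trans ha (leq_addr _ _)) hb) (WT 2 2 isT isT).
  have e2 := Hadd a b 3 2 (WT _ _ ha hb) (WT 3 2 isT isT).
  rewrite -e1 -e2; congr h; lia.
have st2 : forall a b, 2 <= a -> 2 <= b -> h a (b+1) + h 2 2 = h a b + h 2 3.
  move=> a b ha hb.
  have e1 := Hadd a (b+1) 2 2 (WT _ _ ha (leq_trans hb (leq_addr _ _))) (WT 2 2 isT isT).
  have e2 := Hadd a b 2 3 (WT _ _ ha hb) (WT 2 3 isT isT).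
  rewrite -e1 -e2; congr h; lia.
have i1 : forall b n, 2 <= b -> h (2+n) b + n * h 2 2 = h 2 b + n * h 3 2.
  move=> b n hb; elim: n => [|n IH]; first by rewrite addn0.
  have := st1 (2+n) b (leq_addr _ _) hb. rewrite addn1 addnS. nia.
have i2 : forall a m, 2 <= a -> h a (2+m) + m * h 2 2 = h a 2 + m * h 2 3.
  move=> a m ha; elim: m => [|m IH]; first by rewrite addn0.
  have := st2 a (2+m) ha (leq_addr _ _). rewrite addn1 addnS. nia.
have le1 : h 2 2 <= h 3 2.
  have := i1 2 (h 2 2) (leqnn _). have := Hpos (2 + h 2 2) 2 (WT _ _ (leq_addr _ _) (leqnn _)).
  nia.
have le2 : h 2 2 <= h 2 3.
  have := i2 2 (h 2 2) (leqnn _). have := Hpos 2 (2 + h 2 2) (WT _ _ (leqnn _) (leq_addr _ _)).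
  nia.
exists (h 3 2 - h 2 2), (h 2 3 - h 2 2).
have gen : forall n m, h (2+n) (2+m) = h 2 2 + n * (h 3 2 - h 2 2) + m * (h 2 3 - h 2 2).
  move=> n m. have := i2 (2+n) m (leq_addr _ _). have := i1 2 n (leqnn _). nia.
have h22 : h 2 2 = 2 * (h 3 2 - h 2 2) + 2 * (h 2 3 - h 2 2).
  have := Hadd 2 2 2 2 (WT 2 2 isT isT) (WT 2 2 isT isT).
  have := gen 2 2. rewrite /=. nia.
move=> a b Wab.
have := Hadd a b 2 2 Wab (WT 2 2 isT isT).
rewrite (addnC a) (addnC b) gen. nia.
Qed.

Lemma sum1 x y z w : x * y + z * w = 1 -> (x = 1 /\ y = 1) \/ (z = 1 /\ w = 1).
Proof.
move=> H; have [H1|H1] : x * y = 1 \/ z * w = 1 by lia.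
- by move/eqP: H1; rewrite muln_eq1 => /andP[/eqP -> /eqP ->]; left.
- by move/eqP: H1; rewrite muln_eq1 => /andP[/eqP -> /eqP ->]; right.
Qed.

Lemma mat_nat p1 q1 p2 q2 r1 s1 r2 s2 :
  (forall a b, 2 <= a -> 2 <= b ->
     (a * p1 + b * q1) * r1 + (a * p2 + b * q2) * s1 = a /\
     (a * p1 + b * q1) * r2 + (a * p2 + b * q2) * s2 = b) ->
  (p1 = 1 /\ q1 = 0 /\ p2 = 0 /\ q2 = 1) \/ (p1 = 0 /\ q1 = 1 /\ p2 = 1 /\ q2 = 0).
Proof.
move=> H.
have [e1 f1] := H 2 2 isT isT.
have [e2 f2] := H 3 2 isT isT.
have [e3 f3] := H 2 3 isT isT.
have E1 : p1 * r1 + p2 * s1 = 1 by nia.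
have E2 : q1 * r1 + q2 * s1 = 0 by nia.
have E3 : p1 * r2 + p2 * s2 = 0 by nia.
have E4 : q1 * r2 + q2 * s2 = 1 by nia.
have [[P R]|[P S]] : (p1 = 1 /\ r1 = 1) \/ (p2 = 1 /\ s1 = 1) by exact: sum1.
- left; subst. have Q1 : q1 = 0 by lia. subst.
  have [[Q2 S2]|[]] := sum1 _ _ _ _ E4; [|lia]. subst. lia.
- right; subst. have Q2 : q2 = 0 by lia. subst.
  have [[Q1 R2]|[]] := sum1 _ _ _ _ E4; [|lia]. subst. lia.
Qed.

Definition mk k (a b : nat) : vec k := [ffun i : 'I_k => if nat_of_ord i == 0 then a else b].
Definition UA k (A : nat -> Prop) (x : vec k) : Prop := exists a b, W A a b /\ x = mk k a b.
Arguments UA {k}.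

Lemma mk_vadd k a b c d : vadd (mk k a b) (mk k c d) = mk k (a+c) (b+d).
Proof. by apply/ffunP=> i; rewrite !ffunE; case: ifP. Qed.

Lemma mk0 k (i0 : 'I_k) a b : val i0 = 0 -> mk k a b i0 = a.
Proof. by move=> H; rewrite ffunE H. Qed.
Lemma mk1 k (i1 : 'I_k) a b : val i1 = 1 -> mk k a b i1 = b.
Proof. by move=> H; rewrite ffunE H. Qed.

Lemma W_add A a b c d : W A a b -> W A c d -> W A (a+c) (b+d).
Proof. move=> /W_pos [? ?] /W_pos [? ?]; left; lia. Qed.

Lemma linf k (i0 i1 : 'I_k) (H0 : val i0 = 0) (H1 : val i1 = 1) (A B : nat -> Prop) (f : vec k -> vec k) :
  (forall x, UA A x -> UA B (f x)) ->
  (forall x y, UA A x -> UA A y -> f (vadd x y) = vadd (f x) (f y)) ->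
  exists p1 q1 p2 q2, forall a b, W A a b ->
    f (mk k a b) = mk k (a*p1+b*q1) (a*p2+b*q2).
Proof.
move=> Hm Ha.
have mem : forall a b, W A a b -> UA A (mk k a b) by move=> a b w; exists a, b.
have key : forall a b, W A a b ->
   W B (f (mk k a b) i0) (f (mk k a b) i1) /\
   f (mk k a b) = mk k (f (mk k a b) i0) (f (mk k a b) i1).
  move=> a b w; have [c [d [wc ->]]] := Hm _ (mem _ _ w).
  by rewrite mk0 // mk1.
have add : forall (i : 'I_k) a b c d, W A a b -> W A c d ->
    f (mk k (a+c) (b+d)) i = f (mk k a b) i + f (mk k c d) i.
  move=> i a b c d w1 w2; rewrite -mk_vadd Ha; [rewrite /vadd ffunE //| exact: mem | exact: mem].
have [p1 [q1 L1]] := @lin_nat A (fun a b => f (mk k a b) i0) (add i0)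
  (fun a b w => proj1 (W_pos _ _ _ (proj1 (key a b w)))).
have [p2 [q2 L2]] := @lin_nat A (fun a b => f (mk k a b) i1) (add i1)
  (fun a b w => proj2 (W_pos _ _ _ (proj1 (key a b w)))).
exists p1, q1, p2, q2 => a b w.
by rewrite (proj2 (key a b w)) L1 // L2.
Qed.

Lemma dir k (i0 i1 : 'I_k) (H0 : val i0 = 0) (H1 : val i1 = 1) (A B : nat -> Prop) (f g : vec k -> vec k) :
  (forall x, UA (k:=k) A x -> UA B (f x)) ->
  (forall x : vec k, UA B x -> UA A (g x)) ->
  (forall x, UA A x -> g (f x) = x) ->
  (forall x y, UA A x -> UA A y -> f (vadd x y) = vadd (f x) (f y)) ->
  (forall x y, UA B x -> UA B y -> g (vadd x y) = vadd (g x) (g y)) ->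
  forall x : vec k, UA A x -> UA B x.
Proof.
move=> Hf Hg Hgf Haf Hag.
have [p1 [q1 [p2 [q2 Lf]]]] := @linf k i0 i1 H0 H1 A B f Hf Haf.
have [r1 [s1 [r2 [s2 Lg]]]] := @linf k i0 i1 H0 H1 B A g Hg Hag.
have WT : forall a b, 2 <= a -> 2 <= b -> W A a b by move=> a b ? ?; left.
have memB : forall a b, W A a b -> W B (a*p1+b*q1) (a*p2+b*q2).
  move=> a b w; have [c [d [wc e]]] := Hf (mk k a b) (ex_intro _ a (ex_intro _ b (conj w erefl))).
  rewrite Lf // in e.
  have e0 := congr1 (fun v : vec k => v i0) e; have e1 := congr1 (fun v : vec k => v i1) e.
  rewrite /= !(mk0 _ _ _ _ H0) in e0; rewrite /= !(mk1 _ _ _ _ H1) in e1.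
  by rewrite e0 e1.
have M := @mat_nat p1 q1 p2 q2 r1 s1 r2 s2.
have [C|C] : (p1 = 1 /\ q1 = 0 /\ p2 = 0 /\ q2 = 1) \/ (p1 = 0 /\ q1 = 1 /\ p2 = 1 /\ q2 = 0).
  apply: M => a b ha hb.
  have w := WT a b ha hb.
  have e := Hgf (mk k a b) (ex_intro _ a (ex_intro _ b (conj w erefl))).
  rewrite Lf // (Lg _ _ (memB a b w)) in e.
  split.
  - by have := congr1 (fun v : vec k => v i0) e; rewrite /= !(mk0 _ _ _ _ H0).
  - by have := congr1 (fun v : vec k => v i1) e; rewrite /= !(mk1 _ _ _ _ H1).
- move=> x [a [b [w ->]]]; have := memB a b w.
  case: C => -> [-> [-> ->]]; rewrite !muln1 !muln0 addn0 add0n => wB.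
  by exists a, b.
- move=> x [a [b [w ->]]]; have := memB a b w.
  case: C => -> [-> [-> ->]]; rewrite !muln1 !muln0 addn0 add0n => wB.
  exists a, b; split=> //.
  case: w => [[ha hb]|[ea [eb|[hb _]]]]; first by left.
  - by subst; right; split=> //; left.
  - exfalso; case: wB => [[_ ?]|[? _]]; lia.
Qed.

Lemma UA_add k (A : nat -> Prop) (x y : vec k) : UA A x -> UA A y -> UA A (vadd x y).
Proof.
move=> [a [b [w ->]]] [c [d [w' ->]]]; exists (a+c), (b+d); split; last exact: mk_vadd.
exact: W_add.
Qed.

Theorem theoremB (k : nat) (hk : 2 <= k) :
  exists S : (vec k -> Prop) -> Prop,
    (forall U, S U -> subdirect U) /\
    (forall U V, S U -> S V -> semigroup_iso U V -> same_set U V) /\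
    ~ countable_family S.
Proof.
pose i0 : 'I_k := Ordinal (leq_trans (isT : 1 <= 2) hk).
pose i1 : 'I_k := Ordinal (hk : 1 < k).
have H0 : val i0 = 0 by [].
have H1 : val i1 = 1 by [].
exists (fun U => exists A : nat -> Prop, U = UA A).
split; [|split].
- move=> U [A ->]; split; first split.
  + move=> x [a [b [w ->]]] i; have [pa pb] := W_pos _ _ _ w.
    by rewrite ffunE; case: ifP.
  + exact: UA_add.
  + move=> i n hn; exists (mk k n n); split; last by rewrite ffunE; case: ifP.
    exists n, n; split=> //.
    have [->|n2] : n = 1 \/ 2 <= n by lia.
    * by right; split=> //; left.
    * by left.
- move=> U V [A ->] [B ->] [f [g [Hf [Hg [Hgf [Hfg Ha]]]]]].
  have Hag : forall x y, UA B x -> UA B y -> g (vadd x y) = vadd (g x) (g y).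
    move=> x y ux uy.
    rewrite -{1}(Hfg x ux) -{1}(Hfg y uy) -Ha; try exact: Hg.
    by apply: Hgf; apply: UA_add; apply: Hg.
  have Hfg' : forall y, UA B y -> f (g y) = y := Hfg.
  move=> x; split.
  + exact: (@dir k i0 i1 H0 H1 A B f g Hf Hg Hgf Ha Hag).
  + exact: (@dir k i0 i1 H0 H1 B A g f Hg Hf Hfg' Hag Ha).
- move=> [e He].
  pose pt n : vec k := mk k 1 (n+3).
  pose A n := ~ e n (pt n).
  have [n Hn] := He (UA A) (ex_intro _ A erefl).
  have fw : UA A (pt n) -> A n.
    move=> [a [b [w E]]].
    have e0 := congr1 (fun v : vec k => v i0) E; have e1 := congr1 (fun v : vec k => v i1) E.
    rewrite /= /pt !(mk0 _ _ _ _ H0) in e0; rewrite /= /pt !(mk1 _ _ _ _ H1) in e1.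
    subst a b.
    case: w => [[? ?]|[_ [?|[_ HA]]]]; first lia; first lia.
    by rewrite addnK in HA.
  have bw : A n -> UA A (pt n).
    move=> a; exists 1, (n+3); split=> //.
    by right; split=> //; right; split; [lia | rewrite addnK].
  have nP : ~ e n (pt n) := fun p => fw (proj2 (Hn (pt n)) p) p.
  exact: nP (proj1 (Hn (pt n)) (bw nP)).
Qed.
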